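(* Let $n>2$ and $q>0$ be integers such that $n$ is even or $q$ is odd. Then for every prime $p>\max\{n,(q-1)n+1\}$, $$ \sum_{k=0}^{p-1}\frac{(q-\frac{p}{n})_k^n}{(1)_k^n}\equiv0\pmod{p^3}. $$
   Context: $(x)_k$ denotes the Pochhammer symbol: $(x)_0=1$ and $(x)_k=x(x+1)\cdots(x+k-1)$ for $k>0$. A congruence between rational numbers modulo $p^m$ means their difference lies in $p^m\mathbb{Z}_{(p)}$, where $\mathbb{Z}_{(p)}$ is the ring of rationals whose denominators are coprime to $p$. *)

(* Defs.v *)
From mathcomp Require Import all_boot all_order all_algebra.
Set Implicit Arguments. Unset Strict Implicit. Unset Printing Implicit Defensive.
Import Order.TTheory GRing.Theory Num.Theory.
Local Open Scope ring_scope.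

Definition poch (x : rat) (k : nat) : rat := \prod_(i < k) (x + i%:R).

Definition in_Zp (p : nat) (r : rat) : bool := coprime `|denq r|%N p.

Definition congr_rat (p m : nat) (x y : rat) : Prop :=
  exists r : rat, in_Zp p r /\ x - y = (p ^ m)%:R * r.

(* Main.v *)
Require Import Defs.
From mathcomp Require Import all_boot all_order all_algebra.
From mathcomp Require Import ring zify.
Set Implicit Arguments. Unset Strict Implicit. Unset Printing Implicit Defensive.
Import Order.TTheory GRing.Theory Num.Theory.
Local Open Scope ring_scope.

Lemma pintP p (x : rat) : in_Zp p x <->
  exists b : nat, [/\ (0 < b)%N, coprime b p & x * b%:R \is a Num.int].
Proof.
split.
- move=> h; exists `|denq x|%N; split => //; first by rewrite absz_gt0 denq_neq0.
  have -> : (`|denq x|%N)%:R = (denq x)%:~R :> rat.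
    by rewrite -[in RHS]absz_denq.
  by rewrite -numqE intr_int.
- case=> b [b0 cb /intrP[a ha]].
  rewrite /in_Zp; apply: coprime_dvdl cb.
  have e : numq x * b%:Z = a * denq x.
    apply: (@intr_inj rat); rewrite !rmorphM /= numqE -ha.
    by rewrite mulrAC.
  have : (denq x %| numq x * b%:Z)%Z by rewrite e dvdz_mull.
  rewrite Gauss_dvdzr; last by rewrite /coprimez gcdzC; apply: coprime_num_den.
  by [].
Qed.

Section Pint.
Variable p : nat.
Local Notation pint := (in_Zp p).

Lemma pint_int (z : int) : pint (z%:~R).
Proof. by apply/pintP; exists 1%N; split; rewrite ?coprime1n // mulr1 intr_int. Qed.

Lemma pint_nat (k : nat) : pint (k%:R).
Proof. by have := pint_int k; rewrite pmulrn. Qed.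

Lemma pint0 : pint 0. Proof. exact: (pint_nat 0). Qed.
Lemma pint1 : pint 1. Proof. exact: (pint_nat 1). Qed.

Lemma pintM x y : pint x -> pint y -> pint (x * y).
Proof.
move=> /pintP[a [a0 ca ia]] /pintP[b [b0 cb ib]]; apply/pintP.
exists (a * b)%N; split; first by rewrite muln_gt0 a0.
  by rewrite coprimeMl ca.
by rewrite natrM mulrACA rpredM.
Qed.

Lemma pintD x y : pint x -> pint y -> pint (x + y).
Proof.
move=> /pintP[a [a0 ca ia]] /pintP[b [b0 cb ib]]; apply/pintP.
exists (a * b)%N; split; first by rewrite muln_gt0 a0.
  by rewrite coprimeMl ca.
have -> : (x + y) * (a * b)%:R = (x * a%:R) * b%:R + (y * b%:R) * a%:R.
  by rewrite natrM; ring.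
by rewrite rpredD // rpredM // intr_nat // nat_num.
Qed.

Lemma pintN x : pint x -> pint (- x).
Proof.
move=> /pintP[a [a0 ca ia]]; apply/pintP; exists a; split => //.
by rewrite mulNr rpredN.
Qed.

Lemma pintB x y : pint x -> pint y -> pint (x - y).
Proof. by move=> hx hy; apply: pintD => //; apply: pintN. Qed.

Lemma pintX x k : pint x -> pint (x ^+ k).
Proof. by move=> hx; elim: k => [|k ih]; rewrite ?expr0 ?pint1 // exprS pintM. Qed.

Lemma pint_sum I (r : seq I) (P : pred I) (F : I -> rat) :
  (forall i, P i -> pint (F i)) -> pint (\sum_(i <- r | P i) F i).
Proof. by move=> h; apply: (big_ind (in_Zp p)) => //; [exact: pint0 | exact: pintD]. Qed.

Lemma pint_prod I (r : seq I) (P : pred I) (F : I -> rat) :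
  (forall i, P i -> pint (F i)) -> pint (\prod_(i <- r | P i) F i).
Proof. by move=> h; apply: (big_ind (in_Zp p)) => //; [exact: pint1 | exact: pintM]. Qed.

Lemma pintV_nat (k : nat) : coprime k p -> pint (k%:R)^-1.
Proof.
move=> ck; have [->|k0] := posnP k; first by rewrite invr0 pint0.
apply/pintP; exists k; split => //.
by rewrite mulVf ?pnatr_eq0 -?lt0n // rpred1.
Qed.

Lemma pintV_int (z : int) : coprime `|z| p -> pint (z%:~R)^-1.
Proof.
move=> cz; rewrite -[z]mulr_sign_norm rmorphM /= invfM.
apply: pintM; last by rewrite -pmulrn; apply: pintV_nat.
rewrite rmorph_sign -signr_odd; case: (odd _); rewrite ?expr0 ?expr1 ?invr1 ?invrN1.
  exact: (pint_int (-1)). exact: pint1.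
Qed.

Definition pdv j (x : rat) := exists r, pint r /\ x = (p ^ j)%:R * r.

Lemma pdv_pint j x : pdv j x -> pint x.
Proof. by case=> r [hr ->]; apply: pintM => //; apply: pint_nat. Qed.

Lemma pdv0 j : pdv j 0.
Proof. by exists 0; rewrite mulr0; split => //; apply: pint0. Qed.

Lemma pdvD j x y : pdv j x -> pdv j y -> pdv j (x + y).
Proof.
by case=> a [ha ->] [b [hb ->]]; exists (a + b); rewrite mulrDr; split => //; apply: pintD.
Qed.

Lemma pdvN j x : pdv j x -> pdv j (- x).
Proof. by case=> a [ha ->]; exists (- a); rewrite mulrN; split => //; apply: pintN. Qed.

Lemma pdvB j x y : pdv j x -> pdv j y -> pdv j (x - y).
Proof. by move=> hx hy; apply: pdvD => //; apply: pdvN. Qed.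

Lemma pdvMl j x y : pint x -> pdv j y -> pdv j (x * y).
Proof.
by move=> hx [b [hb ->]]; exists (x * b); rewrite mulrCA; split => //; apply: pintM.
Qed.

Lemma pdvMr j x y : pdv j x -> pint y -> pdv j (x * y).
Proof. by move=> hx hy; rewrite mulrC; apply: pdvMl. Qed.

Lemma pdvM i j x y : pdv i x -> pdv j y -> pdv (i + j) (x * y).
Proof.
case=> a [ha ->] [b [hb ->]]; exists (a * b); split; first by apply: pintM.
by rewrite expnD natrM mulrACA.
Qed.

Lemma pdv_le i j x : (i <= j)%N -> pdv j x -> pdv i x.
Proof.
move=> lij [a [ha ->]]; exists ((p ^ (j - i))%:R * a); split.
  by apply: pintM => //; apply: pint_nat.
by rewrite mulrA -natrM -expnD subnKC.
Qed.

Lemma pdv_sum j I (r : seq I) (P : pred I) (F : I -> rat) :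
  (forall i, P i -> pdv j (F i)) -> pdv j (\sum_(i <- r | P i) F i).
Proof. by move=> h; apply: (big_ind (pdv j)) => //; [exact: pdv0 | exact: pdvD]. Qed.

Lemma pdv_nat j : pdv j (p ^ j)%:R.
Proof. by exists 1; rewrite mulr1; split => //; apply: pint1. Qed.

Lemma pdv_prod1 j (I : eqType) (r : seq I) (F : I -> rat) i0 :
  i0 \in r -> pdv j (F i0) -> (forall i, pint (F i)) -> pdv j (\prod_(i <- r) F i).
Proof.
move=> ir h hF; rewrite (big_rem i0) //=; apply: pdvMr => //.
by apply: pint_prod.
Qed.

Definition cg j x y := pdv j (x - y).

Lemma cg_refl j x : cg j x x. Proof. by rewrite /cg subrr; apply: pdv0. Qed.
Lemma cg_sym j x y : cg j x y -> cg j y x.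
Proof. by rewrite /cg => h; rewrite -opprB; apply: pdvN. Qed.
Lemma cg_trans j x y z : cg j x y -> cg j y z -> cg j x z.
Proof. by rewrite /cg => h1 h2; rewrite -(subrKA y); apply: pdvD. Qed.
Lemma cgD j x y x' y' : cg j x x' -> cg j y y' -> cg j (x + y) (x' + y').
Proof. by rewrite /cg => h1 h2; rewrite opprD addrACA; apply: pdvD. Qed.
Lemma cgN j x y : cg j x y -> cg j (- x) (- y).
Proof. by rewrite /cg => h; rewrite -opprD; apply: pdvN. Qed.
Lemma cgM j x y x' y' : pint x -> pint y' -> cg j x x' -> cg j y y' -> cg j (x * y) (x' * y').
Proof.
rewrite /cg => hx hy' h1 h2.
have -> : x * y - x' * y' = x * (y - y') + (x - x') * y' by ring.
by apply: pdvD; [apply: pdvMl | apply: pdvMr].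
Qed.
Lemma cg_sum j I (r : seq I) (P : pred I) (F G : I -> rat) :
  (forall i, P i -> cg j (F i) (G i)) ->
  cg j (\sum_(i <- r | P i) F i) (\sum_(i <- r | P i) G i).
Proof.
move=> h; rewrite /cg -sumrB; apply: pdv_sum => i Pi; exact: h.
Qed.
Lemma cg_prod j I (r : seq I) (F G : I -> rat) :
  (forall i, pint (F i)) -> (forall i, pint (G i)) ->
  (forall i, cg j (F i) (G i)) ->
  cg j (\prod_(i <- r) F i) (\prod_(i <- r) G i).
Proof.
move=> hF hG h; elim: r => [|a r ih]; first by rewrite !big_nil; apply: cg_refl.
rewrite !big_cons; apply: cgM => //; by apply: pint_prod.
Qed.
Lemma cg_le i j x y : (i <= j)%N -> cg j x y -> cg i x y.
Proof. by move=> l; apply: pdv_le. Qed.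
Lemma cg0 j x : cg j x 0 <-> pdv j x.
Proof. by rewrite /cg subr0. Qed.

End Pint.
Lemma alt_step (f : nat -> rat) m :
  \sum_(k < m.+2) (-1) ^+ k * 'C(m.+1, k)%:R * f k =
  \sum_(k < m.+1) (-1) ^+ k * 'C(m, k)%:R * (f k - f k.+1).
Proof.
have e : forall k : nat, 'C(m.+1,k) = ('C(m,k) + (if k is k'.+1 then 'C(m,k') else 0))%N.
  by case=> [|k]; rewrite ?bin0 ?binS.
rewrite (eq_bigr (fun k : 'I_m.+2 => (-1)^+k * 'C(m,k)%:R * f k +
   (-1)^+k * (if (k : nat) is k'.+1 then 'C(m,k') else 0)%N%:R * f k)); last first.
  by move=> k _; rewrite e natrD; ring.
rewrite big_split /= big_ord_recr /= bin_small // mulr0 mul0r addr0.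
rewrite [\sum_(i < m.+2) _]big_ord_recl /= mulr0 mul0r add0r.
rewrite -big_split /=; apply: eq_bigr => i _.
rewrite /bump /= add1n exprS; ring.
Qed.

Lemma size_diff (P : {poly rat}) : (size (P - (P \Po ('X + 1)))%R <= (size P).-1)%N.
Proof.
have [->|P0] := eqVneq P 0; first by rewrite comp_poly0 subr0 size_poly0.
have s2 : size ('X + 1 : {poly rat}) = 2 by rewrite -polyC1 size_XaddC.
have sA := size_comp_poly2 P s2.
have lA : lead_coef (P \Po ('X + 1)) = lead_coef P.
  by rewrite lead_coef_comp ?s2 // -polyC1 lead_coefXaddC expr1n mulr1.
apply/leq_sizeP => j hj; rewrite coefB.
have [ej|] := eqVneq j (size P).-1.
  by move: lA; rewrite /lead_coef sA -ej => ->; rewrite subrr.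
move=> nj; have hj' : (size P <= j)%N.
  by rewrite (leq_trans _ (_ : (size P).-1.+1 <= j)%N) ?leqSpred // ltn_neqAle eq_sym nj hj.
by rewrite !nth_default ?sA // subrr.
Qed.

Lemma alt_sum (P : {poly rat}) m : (size P <= m)%N ->
  \sum_(k < m.+1) (-1) ^+ k * 'C(m, k)%:R * P.[k%:R] = 0.
Proof.
elim: m P => [|m ih] P hs.
  move: hs; rewrite leqn0 size_poly_eq0 => /eqP ->.
  by rewrite big_ord_recl big_ord0 horner0 !mulr0 addr0.
rewrite (alt_step (fun k => P.[k%:R])).
have hQ : (size (P - (P \Po ('X + 1)))%R <= m)%N.
  by rewrite (leq_trans (size_diff P)) //; case: (size P) hs.
rewrite -[RHS](ih _ hQ).
apply: eq_bigr => k _; congr (_ * _).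
by rewrite hornerD hornerN horner_comp hornerD hornerX hornerC -natr1.
Qed.

Lemma pdv_dvd p (a : nat) : (p %| a)%N -> pdv p 1 a%:R.
Proof.
move=> h; exists (a %/ p)%:R; split; first exact: pint_nat.
by rewrite expn1 -natrM mulnC divnK.
Qed.

Lemma binm1 p k : prime p -> (k < p)%N -> pdv p 1 (1 - (-1) ^+ k * 'C(p.-1, k)%:R).
Proof.
move=> pp; elim: k => [|k ih] hk; first by rewrite bin0 mulr1 subrr; apply: pdv0.
have p0 := prime_gt0 pp.
have e : 'C(p.-1, k.+1)%:R = 'C(p, k.+1)%:R - 'C(p.-1, k)%:R :> rat.
  by rewrite -{2}(prednK p0) binS natrD addrK.
have -> : 1 - (-1) ^+ k.+1 * 'C(p.-1, k.+1)%:R =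
   (1 - (-1) ^+ k * 'C(p.-1, k)%:R) + (-1) ^+ k * 'C(p, k.+1)%:R :> rat.
  by rewrite e exprS; ring.
apply: pdvD; first by apply: ih; apply: ltnW.
apply: pdvMl; first by apply: pintX; apply: (pint_int p (-1)).
by apply: pdv_dvd; apply: prime_dvd_bin.
Qed.

Lemma sum_full p (P : {poly rat}) : prime p -> (size P <= p.-1)%N ->
  (forall k, (k < p)%N -> in_Zp p P.[k%:R]) ->
  pdv p 1 (\sum_(0 <= k < p) P.[k%:R]).
Proof.
move=> pp hs hi; have p0 := prime_gt0 pp.
have := alt_sum hs; rewrite prednK // => ha.
rewrite big_mkord; set S := \sum_(k < p) _.
have -> : S = S - \sum_(k < p) (-1) ^+ k * 'C(p.-1, k)%:R * P.[k%:R] by rewrite ha subr0.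
rewrite /S -sumrB.
apply: pdv_sum => k _.
rewrite -{1}[P.[_]]mul1r -mulrBl; apply: pdvMr; last exact: hi.
exact: binm1.
Qed.

Lemma sum_part p (P : {poly rat}) m : prime p -> (m < p)%N -> (size P <= p.-1)%N ->
  (forall k, (k < p)%N -> in_Zp p P.[k%:R]) ->
  (forall k, (m < k)%N -> (k < p)%N -> pdv p 1 P.[k%:R]) ->
  pdv p 1 (\sum_(0 <= k < m.+1) P.[k%:R]).
Proof.
move=> pp mp hs hi hz.
have := sum_full pp hs hi; rewrite (big_cat_nat _ (n := m.+1)) //= => h.
have h2 : pdv p 1 (\sum_(m.+1 <= k < p) P.[k%:R]).
  rewrite big_nat_cond; apply: pdv_sum => k /andP[/andP[a b] _]; exact: hz.
by rewrite -(addrK (\sum_(m.+1 <= k < p) P.[k%:R]) (\sum_(0 <= k < m.+1) _)); apply: pdvB.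
Qed.

Lemma coprime_lt p k : prime p -> (0 < k)%N -> (k < p)%N -> coprime k p.
Proof. by move=> pp k0 kp; rewrite coprime_sym prime_coprime // gtnNdvd. Qed.

Lemma coprime_fact p k : prime p -> (k < p)%N -> coprime k`! p.
Proof.
move=> pp; elim: k => [|k ih] hk; first by rewrite coprime1n.
by rewrite factS coprimeMl ih ?(ltnW hk) // coprime_lt.
Qed.

Lemma poch1 k : poch 1 k = k`!%:R.
Proof.
elim: k => [|k ih]; first by rewrite /poch big_ord0.
by rewrite /poch big_ord_recr /= -/(poch 1 k) ih factS natrM mulrC -natr1 addrC.
Qed.

Lemma pdvX p j x k : pdv p j x -> pdv p (j * k) (x ^+ k).
Proof.
move=> h; elim: k => [|k ih]; first by rewrite muln0 expr0; exists 1; rewrite mulr1; split => //; apply: pint1.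
by rewrite exprS mulnS; apply: pdvM.
Qed.

Lemma pintVfact p k e : prime p -> (k < p)%N -> in_Zp p ((k`!%:R ^+ e)^-1).
Proof.
move=> pp kp; rewrite -natrX; apply: pintV_nat.
by case: e => [|e]; [rewrite expn0 coprime1n | rewrite coprime_pexpl // coprime_fact].
Qed.

Lemma pint_x p n : prime p -> (0 < n)%N -> (n < p)%N -> in_Zp p (p%:R / n%:R).
Proof. by move=> pp n0 np; apply: pintM; [apply: pint_nat | apply: pintV_nat; apply: coprime_lt]. Qed.

Lemma stepA n q p k : prime p -> (0 < n)%N -> (n < p)%N -> (3 <= n)%N ->
  (q <= p)%N -> (p - q < k)%N -> (k < p)%N ->
  pdv p 3 (poch (q%:R - p%:R / n%:R) k ^+ n / poch 1 k ^+ n).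
Proof.
move=> pp n0 np n3 qp mk kp.
rewrite poch1; apply: pdvMr; last exact: pintVfact.
apply: (pdv_le n3).
suff h : pdv p 1 (poch (q%:R - p%:R / n%:R) k) by have := pdvX n h; rewrite mul1n.
rewrite /poch; apply: (pdv_prod1 (i0 := Ordinal mk)); first exact: mem_index_enum.
  rewrite /= natrB //.
  exists (1 - n%:R^-1); split.
    by apply: pintB; [apply: pint1 | apply: pintV_nat; apply: coprime_lt].
  by rewrite expn1; ring.
move=> i; apply: pintD; last exact: pint_nat.
by apply: pintB; [apply: pint_nat | apply: pint_x].
Qed.
Lemma binom3 (a y : rat) n : (a + y)^+(n.+3) = a^+(n.+3) + (n.+3)%:R * a^+(n.+2) * y
  + 'C(n.+3,2)%:R * a^+(n.+1) * y^+2 + y^+3 * \sum_(i < n.+1) (a^+(n - i) * y^+i) *+ 'C(n.+3, i.+3).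
Proof.
rewrite exprDn [in LHS]big_ord_recl [in LHS]big_ord_recl [in LHS]big_ord_recl /bump /=.
rewrite big_distrr /= !addrA; congr (_ + _); last first.
  apply: eq_bigr => i _; have e : y ^+ i.+3 = y ^+ 3 * y ^+ i by rewrite -exprD.
  rewrite /bump /= !add1n !subSS e.
  move: (a ^+ (n - i)) (y ^+ i) ('C(n.+3, i.+3)) => A Y c; by rewrite mulrnAr mulrCA.
rewrite /bump /= ?add1n !subn0 bin0 bin1 !mulr1n expr0 expr1 mulr1.
rewrite -[(n.+3 - 1)%N]/n.+2 -[(n.+3 - 2)%N]/n.+1.
by congr (_ + _ + _); rewrite mulr_natl mulrnAl.
Qed.

Definition uu n p (j : nat) : rat := j%:R ^+ n.-1 * (j%:R - p%:R).
Definition ee n p j : rat := ((j%:R - p%:R / n%:R) ^+ n - uu n p j) / uu n p j.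
Definition gg n p : rat := 'C(n,2)%:R * (p%:R / n%:R) ^+ 2.

Lemma pint_inv_j p j : prime p -> (0 < j)%N -> (j < p)%N -> in_Zp p (j%:R)^-1.
Proof. by move=> pp j0 jp; apply: pintV_nat; apply: coprime_lt. Qed.

Lemma pint_inv_jp p j : prime p -> (0 < j)%N -> (j < p)%N -> in_Zp p (j%:R - p%:R)^-1.
Proof.
move=> pp j0 jp; rewrite -opprB -natrB ?(ltnW jp) // invrN; apply: pintN.
by apply: pintV_nat; apply: coprime_lt; rewrite ?subn_gt0 // ltn_subrL j0 prime_gt0.
Qed.

Lemma uu_neq0 n p j : (0 < j)%N -> (j < p)%N -> uu n p j != 0.
Proof.
move=> j0 jp; rewrite /uu mulf_neq0 // ?expf_neq0 ?pnatr_eq0 -?lt0n //.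
by rewrite subr_eq0 eqr_nat neq_ltn jp.
Qed.

Lemma pint_inv_uu n p j : prime p -> (0 < j)%N -> (j < p)%N -> in_Zp p (uu n p j)^-1.
Proof.
move=> pp j0 jp; rewrite /uu invfM -exprVn; apply: pintM; last exact: pint_inv_jp.
by apply: pintX; apply: pint_inv_j.
Qed.

Lemma pdv_x p n : prime p -> (0 < n)%N -> (n < p)%N -> pdv p 1 (p%:R / n%:R).
Proof.
move=> pp n0 np; exists (n%:R^-1); split; last by rewrite expn1.
by apply: pintV_nat; apply: coprime_lt.
Qed.

Lemma eps_facts n p j : prime p -> (3 <= n)%N -> (n < p)%N -> (0 < j)%N -> (j < p)%N ->
  pdv p 2 (ee n p j) /\ pdv p 3 (ee n p j - gg n p / j%:R ^+ 2).
Proof.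
move=> pp n3 np j0 jp.
have n0 : (0 < n)%N by apply: leq_trans n3.
case: n n3 np n0 => [|[|[|n']]] // _ np n0.
set x := (p%:R / n'.+3%:R : rat).
have hx : pdv p 1 x by apply: pdv_x.
have ix : in_Zp p x by apply: pdv_pint hx.
set a := j%:R : rat.
have ia : in_Zp p a by apply: pint_nat.
have nx : n'.+3%:R * x = p%:R by rewrite /x mulrC divfK // pnatr_eq0.
set R := \sum_(i < n'.+1) (a ^+ (n' - i) * (- x) ^+ i) *+ 'C(n'.+3, i.+3).
have iR : in_Zp p R.
  apply: pint_sum => i _; rewrite -mulr_natr; apply: pintM; last exact: pint_nat.
  by apply: pintM; apply: pintX => //; apply: pintN.
have eD : (a - x) ^+ n'.+3 - uu n'.+3 p j =
    'C(n'.+3, 2)%:R * a ^+ n'.+1 * x ^+ 2 + (- x) ^+ 3 * R.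
  rewrite binom3 /uu -/a /= -nx -/R (exprS a n'.+2); ring.
have u0 := uu_neq0 n'.+3 j0 jp.
have iu := pint_inv_uu n'.+3 pp j0 jp.
have x2 : pdv p 2 (x ^+ 2) by have := pdvX 2 hx.
have x3 : pdv p 3 ((- x) ^+ 3) by have := pdvX 3 (pdvN hx).
split.
  rewrite /ee -/x -/a eD; apply: pdvMr => //; apply: pdvD.
    by apply: pdvMl => //; apply: pintM; [apply: pint_nat | apply: pintX].
  by apply: pdvMr => //; apply: (pdv_le _ x3).
have a0 : a != 0 by rewrite pnatr_eq0 -lt0n.
have -> : ee n'.+3 p j - gg n'.+3 p / j%:R ^+ 2 =
    (- x) ^+ 3 * R / uu n'.+3 p j +
    'C(n'.+3, 2)%:R * x ^+ 2 * p%:R * a ^+ n'.+2 / (uu n'.+3 p j * a ^+ 2).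
  rewrite /ee /gg -/x -/a eD.
  have e2 : uu n'.+3 p j = a ^+ n'.+2 * (a - p%:R) by [].
  move: u0; rewrite e2 => u0.
  have ap : a - p%:R != 0 by move: u0; rewrite mulf_eq0 negb_or => /andP[].
  have a1 : a ^+ n'.+1 != 0 by rewrite expf_neq0.
  rewrite (exprS a n'.+1); move: (a ^+ n'.+1) a1 => A1 a1.
  by field; rewrite a0 a1 ap.
apply: pdvD.
  by apply: pdvMr => //; apply: pdvMr.
rewrite invfM; apply: pdvMr; last first.
  by apply: pintM => //; rewrite -exprVn; apply: pintX; apply: pint_inv_j.
apply: pdvMr; last by apply: pintX.
rewrite -mulrA; apply: pdvMl; first exact: pint_nat.
have := pdvM x2 (pdv_nat p 1); rewrite expn1 addn1; exact.
Qed.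

Lemma prod1 p (e : nat -> rat) k : (forall i, (i < k)%N -> pdv p 2 (e i)) ->
  pdv p 3 (\prod_(i < k) (1 + e i) - 1 - \sum_(i < k) e i).
Proof.
elim: k => [|k ih] h; first by rewrite !big_ord0 subr0 subrr; apply: pdv0.
have ih' := ih (fun i hi => h i (ltnW hi)).
have hk := h k (ltnSn k).
have hs : pdv p 2 (\sum_(i < k) e i) by apply: pdv_sum => i _; apply: h; rewrite ltnS ltnW.
have h2 : pdv p 2 (\prod_(i < k) (1 + e i) - 1).
  rewrite -(subrK (\sum_(i < k) e i) (_ - 1)); apply: pdvD => //.
  by apply: (pdv_le _ ih').
rewrite !big_ord_recr /=.
have -> : (\prod_(i < k) (1 + e i)) * (1 + e k) - 1 - (\sum_(i < k) e i + e k) =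
   (\prod_(i < k) (1 + e i) - 1 - \sum_(i < k) e i) + (\prod_(i < k) (1 + e i) - 1) * e k.
  by ring.
apply: pdvD => //; have := pdvM h2 hk; exact: pdv_le.
Qed.

Definition WW n q p k : rat := \prod_(i < k) uu n p (q + i) / (k`!%:R ^+ n).
Definition a2 q k : rat := \sum_(i < k) ((q + i)%:R ^+ 2)^-1.

Lemma pint_WW n q p k : prime p -> (0 < q)%N -> (q + k <= p)%N -> in_Zp p (WW n q p k).
Proof.
move=> pp q0 qk; apply: pintM; last by apply: pintVfact => //; lia.
apply: pint_prod => i _; apply: pintM; first by apply: pintX; apply: pint_nat.
by apply: pintB; apply: pint_nat.
Qed.

Lemma stepB n q p k : prime p -> (3 <= n)%N -> (n < p)%N -> (0 < q)%N -> (q + k <= p)%N ->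
  cg p 3 (poch (q%:R - p%:R / n%:R) k ^+ n / poch 1 k ^+ n)
         (WW n q p k + gg n p * (WW n q p k * a2 q k)).
Proof.
move=> pp n3 np q0 qk.
have hi : forall i : 'I_k, (0 < q + i)%N /\ (q + i < p)%N.
  move=> i; split; first by rewrite addn_gt0 q0.
  by apply: leq_trans qk; rewrite ltn_add2l.
have eT : poch (q%:R - p%:R / n%:R) k ^+ n / poch 1 k ^+ n =
    WW n q p k * \prod_(i < k) (1 + ee n p (q + i)).
  rewrite /WW poch1 mulrAC -big_split /=; congr (_ / _).
  rewrite /poch -prodrXl; apply: eq_bigr => i _.
  have [h1 h2] := hi i; have u0 := uu_neq0 n h1 h2.
  rewrite /ee natrD (_ : q%:R - p%:R / n%:R + i%:R = q%:R + i%:R - p%:R / n%:R); last by ring.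
  move: (_ ^+ n) (uu n p (q + i)) u0 => Y U u0; by field.
rewrite eT /cg.
have iW : in_Zp p (WW n q p k) by apply: pint_WW.
have -> : WW n q p k * \prod_(i < k) (1 + ee n p (q + i)) -
    (WW n q p k + gg n p * (WW n q p k * a2 q k)) =
    WW n q p k * (\prod_(i < k) (1 + ee n p (q + i)) - 1 - \sum_(i < k) ee n p (q + i))
    + WW n q p k * (\sum_(i < k) (ee n p (q + i) - gg n p / (q + i)%:R ^+ 2)).
  rewrite sumrB /a2 -mulr_sumr; ring.
apply: pdvD; apply: pdvMl => //.
  apply: (prod1 (e := fun i => ee n p (q + i))) => i ik.
  have [h1 h2] := hi (Ordinal ik); exact: (eps_facts pp n3 np h1 h2).1.
apply: pdv_sum => i _; have [h1 h2] := hi i; exact: (eps_facts pp n3 np h1 h2).2.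
Qed.

Definition G0 r k : rat := \prod_(0 <= l < r) (k%:R + l.+1%:R).
Definition Gpoly r : {poly rat} := \prod_(l <- iota 0 r) ('X - (- (l.+1)%:R)%:P).

Lemma Gpoly_eval r k : (Gpoly r).[k%:R] = G0 r k.
Proof.
rewrite /Gpoly horner_prod /G0 /index_iota subn0; apply: eq_bigr => l _.
by rewrite hornerXsubC opprK.
Qed.

Lemma size_Gpoly r : size (Gpoly r) = r.+1.
Proof. by rewrite /Gpoly size_prod_XsubC size_iota. Qed.

Lemma fprod a b : (a`! * \prod_(i < b) (a.+1 + i) = (a + b)`!)%N.
Proof.
elim: b => [|b ih]; first by rewrite big_ord0 muln1 addn0.
by rewrite big_ord_recr /= mulnA ih addnS factS mulnC addSn.
Qed.

Lemma G0_fact r k : \prod_(i < k) (r.+1 + i)%:R * r`!%:R = G0 r k * k`!%:R :> rat.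
Proof.
have e1 : \prod_(i < k) (r.+1 + i)%:R = (\prod_(i < k) (r.+1 + i))%N%:R :> rat by rewrite natr_prod.
have e2 : G0 r k = (\prod_(i < r) (k.+1 + i))%N%:R.
  rewrite natr_prod /G0 big_mkord; apply: eq_bigr => i _; by rewrite -natrD addSnnS.
rewrite e1 e2 -!natrM mulnC fprod mulnC fprod addnC.
by [].
Qed.

Lemma prod_shift q p k : (q + k <= p)%N ->
  \prod_(i < k) ((q + i)%:R - p%:R) = (-1) ^+ k * ('C(p - q, k) * k`!)%N%:R :> rat.
Proof.
move=> km; rewrite bin_ffact ffact_prod natr_prod.
rewrite (_ : (-1) ^+ k = \prod_(i < k) (-1 : rat)); last by rewrite prodr_const card_ord.
rewrite -big_split /=.
apply: eq_bigr => i _; rewrite natrB; last by have := ltn_ord i; lia.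
rewrite natrB; last by lia.
rewrite !natrD; ring.
Qed.

Lemma WW_eq n r p k : (0 < n)%N -> (r.+1 + k <= p)%N ->
  WW n r.+1 p k = (G0 r k / r`!%:R) ^+ n.-1 * ((-1) ^+ k * 'C(p - r.+1, k)%:R).
Proof.
move=> n0 hk; rewrite /WW /uu big_split /= prodrXl prod_shift //.
have e := G0_fact r k.
have f0 : (r`!%:R : rat) != 0 by rewrite pnatr_eq0 -lt0n fact_gt0.
have k0 : (k`!%:R : rat) != 0 by rewrite pnatr_eq0 -lt0n fact_gt0.
have -> : \prod_(i < k) (r.+1 + i)%:R = G0 r k * k`!%:R / r`!%:R :> rat.
  by rewrite -e mulfK.
case: n n0 => // n' _ /=.
rewrite natrM !exprMn exprS.
move: (G0 r k) ('C(p - r.+1, k)%:R : rat) ((-1) ^+ k : rat) => g c s.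
by field; rewrite expf_neq0 // k0.
Qed.

Lemma size_Gc r (c : rat) : (size (Gpoly r * c%:P)%R <= r.+1)%N.
Proof.
apply: leq_trans (size_polyMleq _ _) _; rewrite size_Gpoly.
have := size_polyC_leq1 c; case: (size c%:P) => [|[|s]] //= _; rewrite ?addn0 ?addn1 //.
Qed.

Lemma stepC n r p : (0 < n)%N -> (r * n.-1 + 1 <= p - r.+1)%N -> (r.+1 <= p)%N ->
  \sum_(0 <= k < (p - r.+1).+1) WW n r.+1 p k = 0.
Proof.
move=> n0 hs hp; set m := (p - r.+1)%N.
set P := (Gpoly r * (r`!%:R^-1)%:P) ^+ n.-1.
have sP : (size P <= m)%N.
  apply: leq_trans (size_poly_exp_leq _ _) _.
  have := size_Gc r (r`!%:R^-1); set s := size _ => hs'.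
  apply: leq_trans _ hs; rewrite addn1 ltnS leq_mul2r; apply/orP; right.
  by case: s hs'.
rewrite big_mkord -[RHS](alt_sum sP); apply: eq_bigr => k _.
rewrite WW_eq //; last by have := ltn_ord k; rewrite /m; lia.
rewrite /P horner_exp hornerM hornerC Gpoly_eval; ring.
Qed.

Definition ff r n k : rat := (G0 r k / r`!%:R) ^+ n.

Lemma cgX p j (x y : rat) e : in_Zp p x -> in_Zp p y -> cg p j x y -> cg p j (x ^+ e) (y ^+ e).
Proof.
move=> hx hy h; elim: e => [|e ih]; first by rewrite !expr0; apply: cg_refl.
by rewrite !exprS; apply: cgM => //; apply: pintX.
Qed.

Lemma pint_G0 p r k : in_Zp p (G0 r k).
Proof. by apply: pint_prod => l _; apply: pintD; apply: pint_nat. Qed.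

Lemma pint_ff p r n k : prime p -> (r < p)%N -> in_Zp p (ff r n k).
Proof.
move=> pp rp; apply: pintX; apply: pintM; first exact: pint_G0.
by have := pintVfact 1 pp rp; rewrite expr1.
Qed.

Lemma stepD1 n r p k : prime p -> (0 < n)%N -> (r.+1 + k <= p)%N ->
  cg p 1 (WW n r.+1 p k) (ff r n k).
Proof.
move=> pp n0 hk.
have kp : (k < p)%N by lia.
have e := G0_fact r k.
have f0 : (r`!%:R : rat) != 0 by rewrite pnatr_eq0 -lt0n fact_gt0.
have k0 : (k`!%:R : rat) != 0 by rewrite pnatr_eq0 -lt0n fact_gt0.
have -> : ff r n k = \prod_(i < k) (r.+1 + i)%:R ^+ n / k`!%:R ^+ n.
  rewrite /ff prodrXl -expr_div_n; congr (_ ^+ _).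
  apply: (mulIf f0); apply: (mulIf k0).
  rewrite divfK // -e; move: (\prod_i _) => P0; by field.
rewrite /WW; apply: cgM; last by apply: cg_refl.
- by apply: pint_prod => i _; apply: pintM; [apply: pintX; apply: pint_nat | apply: pintB; apply: pint_nat].
- exact: pintVfact.
apply: cg_prod => i.
- by apply: pintM; [apply: pintX; apply: pint_nat | apply: pintB; apply: pint_nat].
- by apply: pintX; apply: pint_nat.
rewrite /cg /uu.
case: n n0 => // n' _ /=.
have -> : (r.+1 + i)%:R ^+ n' * ((r.+1 + i)%:R - p%:R) - (r.+1 + i)%:R ^+ n'.+1 =
  (p ^ 1)%:R * (- (r.+1 + i)%:R ^+ n') :> rat by rewrite exprS expn1; ring.
exists (- (r.+1 + i)%:R ^+ n'); split => //; apply: pintN; apply: pintX; apply: pint_nat.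
Qed.

Lemma inv_sq_refl p y : prime p -> (0 < y)%N -> (y < p)%N ->
  cg p 1 (((p - y)%N%:R ^+ 2)^-1) ((y%:R ^+ 2)^-1).
Proof.
move=> pp y0 yp.
have z0 : (0 < p - y)%N by rewrite subn_gt0.
have zp : (p - y < p)%N by lia.
have iz := pint_inv_j pp z0 zp.
have iy := pint_inv_j pp y0 yp.
rewrite /cg; exists (((y%:R - (p - y)%N%:R) * ((p - y)%N%:R ^+ 2)^-1 * (y%:R ^+ 2)^-1)); split.
  apply: pintM; last by rewrite -exprVn; apply: pintX.
  by apply: pintM; [apply: pintB; apply: pint_nat | rewrite -exprVn; apply: pintX].
have ez : ((p - y)%N%:R : rat) = p%:R - y%:R by rewrite natrB // ltnW.
have hz : ((p - y)%N%:R : rat) != 0 by rewrite pnatr_eq0 -lt0n.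
have hy : (y%:R : rat) != 0 by rewrite pnatr_eq0 -lt0n.
move: hz; rewrite ez => hz; rewrite expn1.
by field; rewrite hz hy.
Qed.

Lemma cg_prod_in p j (I : eqType) (s : seq I) (F G : I -> rat) :
  (forall i, i \in s -> in_Zp p (F i)) -> (forall i, i \in s -> in_Zp p (G i)) ->
  (forall i, i \in s -> cg p j (F i) (G i)) ->
  cg p j (\prod_(i <- s) F i) (\prod_(i <- s) G i).
Proof.
elim: s => [|a s ih] hF hG h; first by rewrite !big_nil; apply: cg_refl.
rewrite !big_cons; apply: cgM.
- by apply: hF; rewrite mem_head.
- by rewrite big_seq; apply: pint_prod => i hi; apply: hG; rewrite in_cons hi orbT.
- by apply: h; rewrite mem_head.
by apply: ih => i hi; [apply: hF | apply: hG | apply: h]; rewrite in_cons hi orbT.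
Qed.

Lemma G0_refl p r k : (r.+1 + k <= p)%N ->
  cg p 1 (G0 r (p - r.+1 - k)) ((-1) ^+ r * G0 r k).
Proof.
move=> hk.
have e1 : G0 r k = \prod_(0 <= l < r) (k%:R + (r - l)%N%:R).
  rewrite /G0 big_nat_rev /= add0n; apply: congr_big_nat => // l /andP[_ lr].
  by rewrite subnSK.
have e2 : (-1) ^+ r * G0 r k = \prod_(0 <= l < r) (- (k%:R + (r - l)%N%:R)).
  rewrite e1 (_ : (-1) ^+ r = \prod_(0 <= l < r) (-1 : rat)); last first.
    by rewrite prodr_const_nat subn0.
  by rewrite -big_split /=; apply: eq_bigr => l _; rewrite mulN1r.
rewrite e2 /G0; apply: cg_prod_in.
- by move=> l _; apply: pintD; apply: pint_nat.
- by move=> l _; apply: pintN; apply: pintD; apply: pint_nat.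
move=> l; rewrite mem_index_iota => /andP[_ lr].
rewrite /cg opprK; exists 1; split; first exact: pint1.
rewrite mulr1 expn1 !natrB; [|lia|lia|lia].
rewrite -[r.+1%:R]natr1 -[l.+1%:R]natr1; ring.
Qed.

Lemma ff_refl p r n k : prime p -> ~~ odd (r * n) -> (r.+1 + k <= p)%N ->
  cg p 1 (ff r n (p - r.+1 - k)) (ff r n k).
Proof.
move=> pp ev hk.
have rp : (r < p)%N by lia.
have iv : in_Zp p (r`!%:R^-1) by have := pintVfact 1 pp rp; rewrite expr1.
have -> : ff r n k = ((-1) ^+ r * G0 r k / r`!%:R) ^+ n.
  rewrite /ff -mulrA [in RHS]exprMn -exprM -signr_odd (negbTE ev) expr0 mul1r //.
apply: cgX.
- by apply: pintM => //; apply: pint_G0.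
- apply: pintM => //; apply: pintM; last exact: pint_G0.
  by apply: pintX; apply: (pint_int p (-1)).
apply: cgM => //; first by apply: pint_G0.
  exact: G0_refl.
exact: cg_refl.
Qed.

Definition HH N : rat := \sum_(i < N) ((i.+1)%:R ^+ 2)^-1.
Definition bb m k : rat := \sum_(i < m - k) ((k.+1 + i)%:R ^+ 2)^-1.
Definition cc r k : rat := \sum_(i < r) ((k.+1 + i)%:R ^+ 2)^-1.

Lemma Hsplit a b : HH (a + b)%N = HH a + \sum_(i < b) ((a + i).+1%:R ^+ 2)^-1.
Proof. by rewrite /HH big_split_ord. Qed.

Lemma a2bb r m k : (k <= m)%N -> a2 r.+1 k + bb m k = (HH m - HH r) + cc r k.
Proof.
move=> km.
have h1 : a2 r.+1 k = HH (r + k)%N - HH r.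
  by rewrite Hsplit addrC addKr /a2; apply: eq_bigr => i _; rewrite addSn.
have h2 : bb m k = HH m - HH k.
  have -> : HH m = HH (k + (m - k))%N by rewrite subnKC.
  by rewrite Hsplit addrC addKr /bb; apply: eq_bigr => i _; rewrite addSn.
have h3 : cc r k = HH (k + r)%N - HH k.
  by rewrite Hsplit addrC addKr /cc; apply: eq_bigr => i _; rewrite addSn.
by rewrite h1 h2 h3 addnC; ring.
Qed.

Lemma a2_refl p r k : prime p -> (r.+1 + k <= p)%N ->
  cg p 1 (a2 r.+1 (p - r.+1 - k)) (bb (p - r.+1) k).
Proof.
move=> pp hk; rewrite /a2 /bb (reindex_inj rev_ord_inj) /=.
apply: cg_sum => i _.
have hi := ltn_ord i.
have -> : (r.+1 + (p - r.+1 - k - i.+1))%N = (p - (k.+1 + i))%N by lia.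
apply: inv_sq_refl => //; lia.
Qed.

Lemma G0_vanish p r k : (p - r.+1 < k)%N -> (k < p)%N -> pdv p 1 (G0 r k).
Proof.
move=> h1 h2; rewrite /G0; apply: (pdv_prod1 (i0 := (p - k.+1)%N)).
- by rewrite mem_index_iota; apply/andP; split => //; lia.
- by rewrite -natrD (_ : (k + (p - k.+1).+1)%N = (p ^ 1)%N); [apply: pdv_nat | rewrite expn1; lia].
by move=> i; apply: pintD; apply: pint_nat.
Qed.

Lemma size_le_pow (P : {poly rat}) s e : (size P <= s.+1)%N -> (size (P ^+ e) <= (s * e).+1)%N.
Proof.
move=> h; apply: leq_trans (size_poly_exp_leq _ _) _; rewrite ltnS leq_mul2r.
by apply/orP; right; case: (size P) h.
Qed.

Lemma size_mul_le (P Q : {poly rat}) a b : (size P <= a.+1)%N -> (size Q <= b.+1)%N ->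
  (size (P * Q)%R <= (a + b).+1)%N.
Proof. move=> h1 h2; apply: leq_trans (size_polyMleq _ _) _; lia. Qed.

Lemma sum_ff n r p : prime p -> (0 < n)%N -> (r * n + 1 < p)%N ->
  pdv p 1 (\sum_(0 <= k < (p - r.+1).+1) ff r n k).
Proof.
move=> pp n0 hp.
have rp : (r < p)%N by nia.
set P := (Gpoly r * (r`!%:R^-1)%:P) ^+ n.
have eP : forall k, P.[k%:R] = ff r n k.
  by move=> k; rewrite /P horner_exp hornerM hornerC Gpoly_eval.
under eq_bigr do rewrite -eP.
apply: sum_part => //.
- by lia.
- have h1 : (size (Gpoly r * (r`!%:R^-1)%:P)%R <= r.+1)%N by apply: size_Gc.
  apply: leq_trans (size_le_pow n h1) _; lia.
- by move=> k _; rewrite eP; apply: pint_ff.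
move=> k h1 h2; rewrite eP /ff.
have := pdvX n (pdvMr (G0_vanish h1 h2) (pintVfact 1 pp rp)); rewrite mul1n expr1.
by apply: pdv_le.
Qed.

Definition Dl r l : {poly rat} := \prod_(l' <- rem l (iota 0 r)) ('X - (- (l'.+1)%:R)%:P).

Lemma sum_ffl n r p l : prime p -> (3 <= n)%N -> (r * n + 1 < p)%N -> (l < r)%N ->
  pdv p 1 (\sum_(0 <= k < (p - r.+1).+1) ff r n k / ((k.+1 + l)%:R ^+ 2)).
Proof.
move=> pp n3 hp lr.
have rp : (r < p)%N by nia.
have li : l \in iota 0 r by rewrite mem_iota.
have eG : Gpoly r = ('X - (- (l.+1)%:R)%:P) * Dl r l by rewrite /Gpoly (big_rem _ li).
have sD : size (Dl r l) = r by rewrite /Dl size_prod_XsubC size_rem // size_iota prednK //; lia.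
set P := Gpoly r ^+ (n - 2) * Dl r l ^+ 2 * ((r`!%:R^-1) ^+ n)%:P.
have eP : forall k, P.[k%:R] = ff r n k / ((k.+1 + l)%:R ^+ 2).
  move=> k; rewrite /P !hornerM hornerC !horner_exp /ff -Gpoly_eval eG hornerM hornerXsubC.
  have k0 : (k%:R + (l.+1)%:R : rat) != 0 by rewrite -natrD pnatr_eq0 addnS.
  rewrite opprK (_ : ((k.+1 + l)%N%:R : rat) = k%:R + l.+1%:R); last first.
    by rewrite -!natrD addSnnS.
  move: (Dl r l).[k%:R] k0 => D k0.
  case: n n3 {P} hp => [|[|[|n']]] // _ hp.
  rewrite subSS subSS subn0 expr_div_n exprMn.
  have f0 : (r`!%:R : rat) ^+ n'.+3 != 0 by rewrite expf_neq0 // pnatr_eq0 -lt0n fact_gt0.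
  rewrite exprVn exprMn (_ : (k%:R + l.+1%:R) ^+ n'.+3 = (k%:R + l.+1%:R) ^+ n'.+1 * (k%:R + l.+1%:R) ^+ 2); last by rewrite -exprD addn2.
  rewrite (_ : D ^+ n'.+3 = D ^+ n'.+1 * D ^+ 2); last by rewrite -exprD addn2.
  move: (_ ^+ n'.+1) (D ^+ n'.+1) (_ ^+ n'.+3) f0 => A B F f0.
  field; rewrite f0 andbT (addrC 1); by move: k0; rewrite -natr1.
have iD : forall k, in_Zp p (Dl r l).[k%:R].
  move=> k; rewrite /Dl horner_prod; apply: pint_prod => l' _.
  by rewrite hornerXsubC; apply: pintB; [apply: pint_nat | apply: pintN; apply: pint_nat].
under eq_bigr do rewrite -eP.
apply: sum_part => //.
- by lia.
- have s1 : (size (Gpoly r) <= r.+1)%N by rewrite size_Gpoly.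
  have s2 : (size (Dl r l) <= r.-1.+1)%N by rewrite sD prednK //; lia.
  have s3 := size_mul_le (size_le_pow (n - 2) s1) (size_le_pow 2 s2).
  have s4 : (size (((r`!%:R^-1) ^+ n : rat)%:P) <= 0.+1)%N by apply: size_polyC_leq1.
  have s5 := size_mul_le s3 s4.
  apply: leq_trans s5 _; clear s1 s2 s3 s4.
  case: n n3 {P eP} hp => [|[|[|n']]] // _ hp.
  rewrite subSS subSS subn0 addn0.
  case: r rp lr {li eG sD iD} hp => // r' _ _ hp /=.
  nia.
- move=> k _; rewrite /P !hornerM hornerC !horner_exp Gpoly_eval.
  apply: pintM; last by rewrite exprVn; apply: pintVfact.
  apply: pintM; first by apply: pintX; apply: pint_G0.
  by rewrite ?expr2; apply: pintM; apply: iD.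
move=> k h1 h2; rewrite /P !hornerM hornerC !horner_exp Gpoly_eval.
apply: pdvMr; last by rewrite exprVn; apply: pintVfact.
apply: pdvMr; last by rewrite ?expr2; apply: pintM; apply: iD.
have := pdvX (n - 2) (G0_vanish h1 h2); rewrite mul1n; apply: pdv_le; lia.
Qed.

Lemma pint_a2 p r k : prime p -> (r.+1 + k <= p)%N -> in_Zp p (a2 r.+1 k).
Proof.
move=> pp hk; apply: pint_sum => i _; rewrite -exprVn; apply: pintX.
by apply: pint_inv_j => //; have := ltn_ord i; lia.
Qed.

Lemma pint_bb p m k : prime p -> (m < p)%N -> in_Zp p (bb m k).
Proof.
move=> pp mp; apply: pint_sum => i _; rewrite -exprVn; apply: pintX.
by apply: pint_inv_j => //; have := ltn_ord i; lia.
Qed.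

Lemma arith1 r p (kk : nat) : (kk < (p - r.+1).+1)%N -> (r < p)%N -> (r.+1 + kk <= p)%N.
Proof. lia. Qed.

Lemma stepE n r p : prime p -> (3 <= n)%N -> (r * n + 1 < p)%N -> ~~ odd (r * n) -> odd p ->
  pdv p 1 (\sum_(0 <= k < (p - r.+1).+1) ff r n k * a2 r.+1 k).
Proof.
move=> pp n3 hp ev op.
have rp : (r < p)%N by nia.
set m := (p - r.+1)%N.
have mp : (m < p)%N by rewrite /m; lia.
set X := \sum_(0 <= k < m.+1) ff r n k * a2 r.+1 k.
have h1 : cg p 1 X (\sum_(0 <= k < m.+1) ff r n k * bb m k).
  rewrite /X big_nat_rev /= add0n !big_mkord; apply: cg_sum => k _.
  have hk := ltn_ord k; rewrite subSS.
  apply: cgM.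
  - exact: pint_ff.
  - exact: pint_bb.
  - by apply: ff_refl => //; apply: (arith1 hk rp).
  - by apply: a2_refl => //; apply: (arith1 hk rp).
have h2 : X + \sum_(0 <= k < m.+1) ff r n k * bb m k =
   (HH m - HH r) * \sum_(0 <= k < m.+1) ff r n k +
   \sum_(l < r) \sum_(0 <= k < m.+1) ff r n k / ((k.+1 + l)%:R ^+ 2).
  rewrite /X -big_split /= mulr_sumr (exchange_big _ _ (index_iota 0 m.+1)) /= -big_split /=.
  rewrite big_nat_cond [RHS]big_nat_cond; apply: eq_bigr => k /andP[/andP[_ hk] _].
  rewrite -mulrDr a2bb; last by rewrite -ltnS.
  by rewrite mulrDr mulrC /cc mulr_sumr.
have h3 : pdv p 1 (X + \sum_(0 <= k < m.+1) ff r n k * bb m k).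
  rewrite h2; apply: pdvD.
    apply: pdvMl; first by apply: pintB; apply: pint_sum => i _; rewrite -exprVn; apply: pintX;
      apply: pint_inv_j => //; have := ltn_ord i; lia.
    by apply: sum_ff => //; apply: leq_trans n3.
  by apply: pdv_sum => l _; apply: sum_ffl => //; apply: ltn_ord.
have h4 : pdv p 1 (X + X).
  have := cgD (cg_refl p 1 X) h1; rewrite /cg => h.
  by rewrite -(subrK (X + \sum_(0 <= k < m.+1) ff r n k * bb m k) (X + X)); apply: pdvD.
have -> : X = 2%:R^-1 * (X + X) by field.
apply: pdvMl => //; apply: pintV_nat; apply: coprime_lt => //.
by apply: odd_prime_gt2.
Qed.

Lemma arith2 r n p : (3 <= n)%N -> (r * n + 1 < p)%N -> (r * n.-1 + 1 <= p - r.+1)%N /\ (r.+1 <= p)%N.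
Proof. move=> h1 h2; case: n h1 h2 => // n _ /= h2; split; nia. Qed.

Unset Implicit Arguments.

Theorem theorem1p1 (n q p : nat) :
  (2 < n)%N -> (0 < q)%N -> (~~ odd n || odd q) ->
  prime p -> (maxn n ((q - 1) * n + 1) < p)%N ->
  congr_rat p 3
    (\sum_(0 <= k < p)
        (poch (q%:R - p%:R / n%:R) k) ^+ n / (poch 1 k) ^+ n)
    0.
Proof.
move=> n3 q0 par pp hmax.
case: q q0 par hmax => // r _ par hmax.
rewrite gtn_max subn1 /= in hmax; case/andP: hmax => np hp.
have n0 : (0 < n)%N by lia.
have ev : ~~ odd (r * n).
  by rewrite oddM; move: par => /=; case: (odd n); case: (odd r).
have op : odd p.
  by case: (even_prime pp) => // e; move: np; rewrite e; lia.
have [hC rq] := arith2 n3 hp.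
set m := (p - r.+1)%N.
rewrite /congr_rat -/(pdv p 3 _) subr0.
rewrite (big_cat_nat _ (n := m.+1)) //=; last by rewrite /m; lia.
apply: pdvD; last first.
  rewrite big_nat_cond; apply: pdv_sum => k /andP[/andP[h1 h2] _].
  apply: stepA => //; rewrite /m in h1; lia.
set S1 := \sum_(0 <= k < m.+1) _.
have h1 : cg p 3 S1 (\sum_(0 <= k < m.+1) (WW n r.+1 p k + gg n p * (WW n r.+1 p k * a2 r.+1 k))).
  rewrite /S1 !big_mkord; apply: cg_sum => k _; apply: stepB => //.
  by apply: arith1 (ltn_ord k) _; lia.
have h2 : \sum_(0 <= k < m.+1) (WW n r.+1 p k + gg n p * (WW n r.+1 p k * a2 r.+1 k)) =
    gg n p * \sum_(0 <= k < m.+1) WW n r.+1 p k * a2 r.+1 k.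
  by rewrite big_split /= stepC // add0r mulr_sumr.
have hY : pdv p 1 (\sum_(0 <= k < m.+1) WW n r.+1 p k * a2 r.+1 k).
  have := stepE pp n3 hp ev op; rewrite -/m => hE.
  have hc : cg p 1 (\sum_(0 <= k < m.+1) WW n r.+1 p k * a2 r.+1 k)
                 (\sum_(0 <= k < m.+1) ff r n k * a2 r.+1 k).
    rewrite !big_mkord; apply: cg_sum => k _.
    have hk : (r.+1 + k <= p)%N by apply: arith1 (ltn_ord k) _; lia.
    apply: cgM.
    - exact: pint_WW.
    - exact: pint_a2.
    - exact: stepD1.
    - exact: cg_refl.
  by rewrite -(subrK (\sum_(0 <= k < m.+1) ff r n k * a2 r.+1 k) (\sum_(0 <= k < m.+1) _)); apply: pdvD.
have hg : pdv p 2 (gg n p).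
  by apply: pdvMl; [apply: pint_nat | have := pdvX 2 (pdv_x pp n0 np)].
have h3 : pdv p 3 (gg n p * \sum_(0 <= k < m.+1) WW n r.+1 p k * a2 r.+1 k).
  by have := pdvM hg hY.
move: h1; rewrite h2 /cg => h1.
by rewrite -(subrK (gg n p * \sum_(0 <= k < m.+1) WW n r.+1 p k * a2 r.+1 k) S1); apply: pdvD.
Qed.
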